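(* Let $\Gamma$ be a countable group and let $\mathcal P\subseteq\mathrm{Sub}_{[\infty]}(\Gamma)$ be any subset satisfying condition $(\ast)$. Let $\overline{\mathcal P}$ denote the closure of $\mathcal P$ in $\mathrm{Sub}_{[\infty]}(\Gamma)$. Then $\mathcal{HT}(\Gamma)\cap\overline{\mathcal P}$ is a dense $G_\delta$ subset of $\overline{\mathcal P}$.
   Context: $\mathrm{Sub}(\Gamma)$ is the set of subgroups with the topology generated by the clopen sets $\{\Lambda:\mathcal I\subseteq\Lambda,\ \mathcal O\cap\Lambda=\emptyset\}$, $\mathcal I,\mathcal O$ finite; $\mathrm{Sub}_{[\infty]}(\Gamma)$ is the subspace of infinite index subgroups. $\mathcal{HT}(\Gamma)$ is the set of infinite index $\Lambda$ with $\Lambda\backslash\Gamma\curvearrowleft\Gamma$ (right multiplication) highly transitive. Condition $(\ast)$ for $\mathcal P$: for every $\Lambda\in\mathcal P$, every $d\ge1$, every $g_1,\dots,g_{2d}\in\Gamma$ with $\Lambda g_1,\dots,\Lambda g_{2d}$ pairwise distinct, and every neighborhood $\mathcal V$ of $\Lambda$, there exist $\Lambda'\in\mathcal P\cap\mathcal V$ and $\gamma\in\Gamma$ with $\Lambda' g_i\gamma=\Lambda' g_{i+d}$ for all $i\in\{1,\dots,d\}$. *)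

(* Defs.v *)
From Stdlib Require Import List Arith.
Import ListNotations.

Record group := Group {
  carrier :> Type;
  gmul : carrier -> carrier -> carrier;
  gone : carrier;
  ginv : carrier -> carrier;
  gmul_assoc : forall x y z, gmul x (gmul y z) = gmul (gmul x y) z;
  gmul_1l : forall x, gmul gone x = x;
  gmul_1r : forall x, gmul x gone = x;
  gmul_Vl : forall x, gmul (ginv x) x = gone;
  gmul_Vr : forall x, gmul x (ginv x) = gone
}.

Arguments gmul {g}.
Arguments gone {g}.
Arguments ginv {g}.

Definition countable_group (G : group) : Prop :=
  exists f : G -> nat, forall x y, f x = f y -> x = y.

Definition subset_of (G : group) := G -> Prop.

Definition is_subgroup {G : group} (L : subset_of G) : Prop :=
  L gone /\ (forall x y, L x -> L y -> L (gmul x y)) /\ (forall x, L x -> L (ginv x)).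

(* Equality of right cosets: L g = L h  iff  g h^-1 \in L. *)
Definition same_coset {G : group} (L : subset_of G) (g h : G) : Prop :=
  L (gmul g (ginv h)).

(* Infinite index: the set of right cosets L\G is not finite, i.e. no finite
   list of elements meets every right coset. *)
Definition infinite_index {G : group} (L : subset_of G) : Prop :=
  ~ exists s : list G, forall g, exists h, In h s /\ same_coset L g h.

Definition SubInf {G : group} (L : subset_of G) : Prop :=
  is_subgroup L /\ infinite_index L.

(* Basic clopen set {L : I ⊆ L, O ∩ L = ∅} of Sub(G), I, O finite. *)
Definition basic {G : group} (I O : list G) (L : subset_of G) : Prop :=
  (forall x, In x I -> L x) /\ (forall x, In x O -> ~ L x).

Definition open_SubInf {G : group} (U : subset_of G -> Prop) : Prop :=
  forall L, U L -> SubInf L /\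
    exists I O, basic I O L /\ forall L', SubInf L' -> basic I O L' -> U L'.

Definition closure_SubInf {G : group} (P : subset_of G -> Prop) (L : subset_of G) : Prop :=
  SubInf L /\ forall I O, basic I O L -> exists L', P L' /\ basic I O L'.

Definition pairwise_distinct_cosets {G : group} (L : subset_of G) (n : nat) (x : nat -> G) : Prop :=
  forall i j, i < n -> j < n -> i <> j -> ~ same_coset L (x i) (x j).

Definition highly_transitive {G : group} (L : subset_of G) : Prop :=
  forall (n : nat) (x y : nat -> G),
    pairwise_distinct_cosets L n x -> pairwise_distinct_cosets L n y ->
    exists gamma : G, forall i, i < n -> same_coset L (gmul (x i) gamma) (y i).

Definition HT {G : group} (L : subset_of G) : Prop :=
  SubInf L /\ highly_transitive L.

(* Condition ( * ) for P (0-based indices: g_0..g_{2d-1}, pairing g_i with g_{i+d}).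
   Neighbourhoods of L are quantified through basic neighbourhoods (every
   neighbourhood contains one, and the condition is monotone in V). *)
Definition condition_star {G : group} (P : subset_of G -> Prop) : Prop :=
  forall L, P L ->
  forall (d : nat) (g : nat -> G), 1 <= d ->
    pairwise_distinct_cosets L (2 * d) g ->
    forall I O, basic I O L ->
      exists L' gamma, P L' /\ basic I O L' /\
        forall i, i < d -> same_coset L' (gmul (g i) gamma) (g (i + d)).

Definition dense_in {G : group} (A C : subset_of G -> Prop) : Prop :=
  forall L, C L -> forall I O, basic I O L -> exists L', A L' /\ C L' /\ basic I O L'.

Definition Gdelta_in {G : group} (A C : subset_of G -> Prop) : Prop :=
  exists U : nat -> (subset_of G -> Prop),
    (forall n, open_SubInf (U n)) /\
    forall L, A L <-> (C L /\ forall n, U n L).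

(* Main.v *)
Require Import Defs.
From Stdlib Require Import List Arith Lia Classical ClassicalEpsilon Cantor.
Import ListNotations.

Lemma inv_unique {G : group} (x y : G) : gmul x y = gone -> y = ginv x.
Proof. intros H. rewrite <- (gmul_1l G y). rewrite <- (gmul_Vl G x).
  rewrite <- gmul_assoc. rewrite H. apply gmul_1r. Qed.

Lemma inv_mul {G : group} (x y : G) : ginv (gmul x y) = gmul (ginv y) (ginv x).
Proof. symmetry. apply inv_unique. rewrite <- gmul_assoc, (gmul_assoc _ y), gmul_Vr, gmul_1l, gmul_Vr.
  reflexivity. Qed.

Lemma inv_inv {G : group} (x : G) : ginv (ginv x) = x.
Proof. symmetry. apply inv_unique. apply gmul_Vl. Qed.

Lemma rmul_cancel {G : group} (x y c : G) :
  gmul (gmul x c) (ginv (gmul y c)) = gmul x (ginv y).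
Proof. rewrite inv_mul, <- gmul_assoc, (gmul_assoc _ c), gmul_Vr, gmul_1l. reflexivity. Qed.

Lemma sc_sym {G : group} (L : subset_of G) : is_subgroup L ->
  forall x y, same_coset L x y -> same_coset L y x.
Proof. intros [H1 [H2 H3]] x y H. unfold same_coset in *. apply H3 in H.
  rewrite inv_mul, inv_inv in H. exact H. Qed.

Lemma sc_trans {G : group} (L : subset_of G) : is_subgroup L ->
  forall x y z, same_coset L x y -> same_coset L y z -> same_coset L x z.
Proof. intros [H1 [H2 H3]] x y z Hxy Hyz. unfold same_coset in *.
  pose proof (H2 _ _ Hxy Hyz) as H.
  rewrite <- gmul_assoc, (gmul_assoc _ (ginv y)), gmul_Vl, gmul_1l in H. exact H. Qed.

Lemma avoid {G : group} (L : subset_of G) : infinite_index L ->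
  forall s : list G, exists g, forall h, In h s -> ~ same_coset L g h.
Proof. intros Hinf s. apply NNPP. intros Hn. apply Hinf. exists s. intros g.
  apply NNPP; intros Hg. apply Hn. exists g. intros h Hh Hsc. apply Hg. exists h. auto. Qed.

Lemma choose_z {G : group} (L : subset_of G) : is_subgroup L -> infinite_index L ->
  forall (s : list G) n, exists z : nat -> G,
  (forall i j, i < n -> j < n -> i <> j -> ~ same_coset L (z i) (z j)) /\
  (forall i h, i < n -> In h s -> ~ same_coset L (z i) h).
Proof.
  intros Hs Hinf s n. induction n as [|n [z [Hz1 Hz2]]].
  - exists (fun _ => gone). split; intros; lia.
  - destruct (avoid L Hinf (s ++ map z (seq 0 n))) as [g Hg].
    exists (fun i => if Nat.eqb i n then g else z i). split.
    + intros i j Hi Hj Hij. destruct (Nat.eqb_spec i n), (Nat.eqb_spec j n); try lia.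
      * apply Hg. apply in_or_app; right. apply in_map. apply in_seq. lia.
      * intros Hc. apply sc_sym in Hc; [|exact Hs]. revert Hc. apply Hg.
        apply in_or_app; right. apply in_map, in_seq; lia.
      * apply Hz1; lia.
    + intros i h Hi Hh. destruct (Nat.eqb_spec i n).
      * apply Hg. apply in_or_app; left; exact Hh.
      * apply Hz2; [lia|exact Hh].
Qed.

Definition plist {G : group} (n : nat) (h : nat -> nat -> G) : list G :=
  flat_map (fun i => flat_map (fun j => if Nat.eqb i j then [] else [h i j]) (seq 0 n)) (seq 0 n).

Lemma plist_in1 {G : group} n (h : nat -> nat -> G) i j :
  i < n -> j < n -> i <> j -> In (h i j) (plist n h).
Proof. intros. unfold plist. apply in_flat_map. exists i. split. apply in_seq; lia.
  apply in_flat_map. exists j. split. apply in_seq; lia.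
  destruct (Nat.eqb_spec i j); [lia|]. left; reflexivity. Qed.

Lemma plist_in2 {G : group} n (h : nat -> nat -> G) a :
  In a (plist n h) -> exists i j, i < n /\ j < n /\ i <> j /\ a = h i j.
Proof. unfold plist. intros H. apply in_flat_map in H. destruct H as [i [Hi H]].
  apply in_flat_map in H. destruct H as [j [Hj H]]. apply in_seq in Hi, Hj.
  destruct (Nat.eqb_spec i j). destruct H. destruct H as [H|[]].
  exists i, j. split; [lia|split;[lia|split;[auto|symmetry; exact H]]]. Qed.

Definition flist {G : group} (n : nat) (h : nat -> nat -> G) : list G :=
  flat_map (fun i => map (h i) (seq 0 n)) (seq 0 n).

Lemma flist_in1 {G : group} n (h : nat -> nat -> G) i j :
  i < n -> j < n -> In (h i j) (flist n h).
Proof. intros. unfold flist. apply in_flat_map. exists i. split. apply in_seq; lia.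
  apply in_map. apply in_seq; lia. Qed.

Lemma flist_in2 {G : group} n (h : nat -> nat -> G) a :
  In a (flist n h) -> exists i j, i < n /\ j < n /\ a = h i j.
Proof. unfold flist. intros H. apply in_flat_map in H. destruct H as [i [Hi H]].
  apply in_map_iff in H. destruct H as [j [Hj H]]. apply in_seq in Hi, H.
  exists i, j. split; [lia|split;[lia|symmetry; exact Hj]]. Qed.

Definition tfun {G : group} (l : list G) (i : nat) : G := nth i l gone.

Definition task_ok {G : group} (L : subset_of G) (xs ys : list G) : Prop :=
  (exists i j, i < length xs /\ j < length xs /\ i <> j /\
      L (gmul (tfun xs i) (ginv (tfun xs j)))) \/
  (exists i j, i < length xs /\ j < length xs /\ i <> j /\
      L (gmul (tfun ys i) (ginv (tfun ys j)))) \/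
  (exists gamma, forall i, i < length xs ->
      L (gmul (gmul (tfun xs i) gamma) (ginv (tfun ys i)))).

Lemma task_ok_mono {G : group} (L1 L2 : subset_of G) xs ys :
  (forall a, L1 a -> L2 a) -> task_ok L1 xs ys -> task_ok L2 xs ys.
Proof. intros H [[i [j [? [? [? Hl]]]]]|[[i [j [? [? [? Hl]]]]]|[g Hg]]].
  - left. exists i, j. auto.
  - right; left. exists i, j. auto.
  - right; right. exists g. auto. Qed.

Lemma HT_task {G : group} (L : subset_of G) xs ys :
  highly_transitive L -> task_ok L xs ys.
Proof.
  intros HT.
  destruct (classic (exists i j, i < length xs /\ j < length xs /\ i <> j /\
      L (gmul (tfun xs i) (ginv (tfun xs j))))) as [H|Hx]; [left; exact H|].
  destruct (classic (exists i j, i < length xs /\ j < length xs /\ i <> j /\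
      L (gmul (tfun ys i) (ginv (tfun ys j))))) as [H|Hy]; [right; left; exact H|].
  right; right.
  destruct (HT (length xs) (tfun xs) (tfun ys)) as [g Hg].
  - intros i j Hi Hj Hij Hc. apply Hx. exists i, j. auto.
  - intros i j Hi Hj Hij Hc. apply Hy. exists i, j. auto.
  - exists g. exact Hg.
Qed.

Lemma tfun_map {G : group} (x : nat -> G) n i : i < n -> tfun (map x (seq 0 n)) i = x i.
Proof. intros Hi. unfold tfun. rewrite (nth_indep _ gone (x 0)).
  - rewrite map_nth, seq_nth; auto.
  - rewrite length_map, length_seq; auto. Qed.

Lemma task_HT {G : group} (L : subset_of G) (t : nat -> list G * list G) :
  (forall p, exists k, t k = p) ->
  (forall k, task_ok L (fst (t k)) (snd (t k))) -> highly_transitive L.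
Proof.
  intros Ht H n x y Hx Hy.
  destruct (Ht (map x (seq 0 n), map y (seq 0 n))) as [k Hk].
  specialize (H k). rewrite Hk in H. unfold task_ok in H. simpl in H.
  rewrite length_map, length_seq in H.
  destruct H as [[i [j [Hi [Hj [Hij Hl]]]]]|[[i [j [Hi [Hj [Hij Hl]]]]]|[g Hg]]].
  - rewrite !tfun_map in Hl by auto. exfalso. exact (Hx i j Hi Hj Hij Hl).
  - rewrite !tfun_map in Hl by auto. exfalso. exact (Hy i j Hi Hj Hij Hl).
  - exists g. intros i Hi. specialize (Hg i Hi). rewrite !tfun_map in Hg by auto. exact Hg.
Qed.

Lemma inj_surj {A : Type} (a0 : A) (enc : A -> nat) :
  (forall x y, enc x = enc y -> x = y) -> exists d : nat -> A, forall x, exists k, d k = x.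
Proof. intros Hinj. exists (fun k => epsilon (inhabits a0) (fun x => enc x = k)).
  intros x. exists (enc x). apply Hinj.
  apply (epsilon_spec (inhabits a0) (fun y => enc y = enc x)). exists x; reflexivity. Qed.

Fixpoint enc_list {G : group} (f : G -> nat) (l : list G) : nat :=
  match l with [] => 0 | a :: l => S (to_nat (f a, enc_list f l)) end.

Lemma enc_list_inj {G : group} (f : G -> nat) : (forall x y, f x = f y -> x = y) ->
  forall l l', enc_list f l = enc_list f l' -> l = l'.
Proof. intros Hf. induction l as [|a l IH]; intros [|b l'] H; try discriminate; auto.
  change (S (to_nat (f a, enc_list f l)) = S (to_nat (f b, enc_list f l'))) in H.
  assert (H' : to_nat (f a, enc_list f l) = to_nat (f b, enc_list f l')) by congruence.
  clear H. pose proof (f_equal of_nat H') as H. rewrite !cancel_of_to in H.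
  injection H as H1 H2. apply Hf in H1. apply IH in H2. subst. reflexivity. Qed.

Lemma enum_tasks {G : group} : countable_group G ->
  exists t : nat -> list G * list G, forall p, exists k, t k = p.
Proof. intros [f Hf]. destruct (inj_surj (@nil G) (enc_list f) (enc_list_inj f Hf)) as [d Hd].
  exists (fun k => (d (fst (of_nat k)), d (snd (of_nat k)))).
  intros [xs ys]. destruct (Hd xs) as [a Ha]. destruct (Hd ys) as [b Hb].
  exists (to_nat (a, b)). rewrite cancel_of_to. simpl. congruence. Qed.

Lemma enum_lists {G : group} : countable_group G ->
  exists d : nat -> list G, forall l, exists k, d k = l.
Proof. intros [f Hf]. exact (inj_surj (@nil G) (enc_list f) (enc_list_inj f Hf)). Qed.

Lemma enum_G {G : group} : countable_group G -> exists e : nat -> G, forall x, exists k, e k = x.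
Proof. intros [f Hf]. exact (inj_surj gone f Hf). Qed.

Record state (G : group) := mkst { sL : subset_of G; sI : list G; sO : list G }.
Arguments mkst {G}. Arguments sL {G}. Arguments sI {G}. Arguments sO {G}.

Definition valid {G : group} (P : subset_of G -> Prop) (s : state G) : Prop :=
  P (sL s) /\ basic (sI s) (sO s) (sL s).
Definition ext {G : group} (s s' : state G) : Prop :=
  incl (sI s) (sI s') /\ incl (sO s) (sO s').

Lemma basic_mono {G : group} (I O I' O' : list G) L :
  incl I I' -> incl O O' -> basic I' O' L -> basic I O L.
Proof. intros HI HO [H1 H2]. split; auto. Qed.

Lemma step1 {G : group} (P : subset_of G -> Prop) (x : G) (s : state G) :
  valid P s -> exists s', valid P s' /\ ext s s' /\ (In x (sI s') \/ In x (sO s')).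
Proof.
  intros [HP [HI HO]]. destruct (classic (sL s x)) as [Hx|Hx].
  - exists (mkst (sL s) (x :: sI s) (sO s)). split; [split; [auto|split]|split; [split|]]; simpl.
    + intros a Ha; simpl in Ha; destruct Ha as [<-|Ha]; auto.
    + auto.
    + apply incl_tl, incl_refl.
    + apply incl_refl.
    + left; left; reflexivity.
  - exists (mkst (sL s) (sI s) (x :: sO s)). split; [split; [auto|split]|split; [split|]]; simpl.
    + auto.
    + intros a Ha; simpl in Ha; destruct Ha as [<-|Ha]; auto.
    + apply incl_refl.
    + apply incl_tl, incl_refl.
    + right; left; reflexivity.
Qed.

Lemma step2 {G : group} (P : subset_of G -> Prop) (HPs : forall L, P L -> SubInf L)
  (l : list G) (s : state G) :
  valid P s -> exists s', valid P s' /\ ext s s' /\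
    exists g, forall h, In h l -> In (gmul g (ginv h)) (sO s').
Proof.
  intros [HP [HI HO]]. destruct (HPs _ HP) as [Hsub Hinf].
  destruct (avoid _ Hinf l) as [g Hg].
  exists (mkst (sL s) (sI s) (map (fun h => gmul g (ginv h)) l ++ sO s)).
  split; [split; [auto|split]|split; [split|]]; simpl.
  - auto.
  - intros a Ha. apply in_app_or in Ha. destruct Ha as [Ha|Ha]; auto.
    apply in_map_iff in Ha. destruct Ha as [h [<- Hh]]. exact (Hg h Hh).
  - apply incl_refl.
  - apply incl_appr, incl_refl.
  - exists g. intros h Hh. apply in_or_app; left. apply in_map_iff. exists h; auto.
Qed.

Lemma step3 {G : group} (P : subset_of G -> Prop) (HPs : forall L, P L -> SubInf L)
  (Hstar : condition_star P) (xs ys : list G) (s : state G) :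
  valid P s -> exists s', valid P s' /\ ext s s' /\ task_ok (fun a => In a (sI s')) xs ys.
Proof.
  intros [HP [HI HO]].
  set (n := length xs). set (x := tfun xs). set (y := tfun ys). set (L := sL s) in *.
  destruct (classic (exists i j, i < n /\ j < n /\ i <> j /\ L (gmul (x i) (ginv (x j)))))
    as [[i [j [Hi [Hj [Hij Hl]]]]]|Hx].
  { exists (mkst L (gmul (x i) (ginv (x j)) :: sI s) (sO s)).
    split; [split; [exact HP|split]|split; [split|]]; simpl.
    - intros a Ha. destruct Ha as [<-|Ha]; auto.
    - exact HO.
    - apply incl_tl, incl_refl.
    - apply incl_refl.
    - left. exists i, j. split; [exact Hi|split; [exact Hj|split; [exact Hij|left; reflexivity]]]. }
  destruct (classic (exists i j, i < n /\ j < n /\ i <> j /\ L (gmul (y i) (ginv (y j)))))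
    as [[i [j [Hi [Hj [Hij Hl]]]]]|Hy].
  { exists (mkst L (gmul (y i) (ginv (y j)) :: sI s) (sO s)).
    split; [split; [exact HP|split]|split; [split|]]; simpl.
    - intros a Ha. destruct Ha as [<-|Ha]; auto.
    - exact HO.
    - apply incl_tl, incl_refl.
    - apply incl_refl.
    - right; left. exists i, j. split; [exact Hi|split; [exact Hj|split; [exact Hij|left; reflexivity]]]. }
  destruct (Nat.eq_dec n 0) as [Hn0|Hn].
  { exists s. split; [split; [exact HP|split; assumption]|split; [split; apply incl_refl|]].
    right; right. exists gone. intros i Hi. change (i < n) in Hi. lia. }
  destruct (HPs _ HP) as [Hsub Hinf].
  destruct (choose_z L Hsub Hinf (map x (seq 0 n) ++ map y (seq 0 n)) n) as [z [Hz1 Hz2]].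
  set (g1 := fun i => if i <? n then x i else z (i - n)).
  assert (Hpd1 : pairwise_distinct_cosets L (2 * n) g1).
  { intros i j Hi Hj Hij. unfold g1.
    destruct (Nat.ltb_spec i n), (Nat.ltb_spec j n).
    - intros Hc. apply Hx. exists i, j. repeat split; auto.
    - intros Hc. apply sc_sym in Hc; [|exact Hsub]. revert Hc. apply Hz2; [lia|].
      apply in_or_app; left. apply in_map, in_seq; lia.
    - apply Hz2; [lia|]. apply in_or_app; left. apply in_map, in_seq; lia.
    - apply Hz1; lia. }
  set (O1 := plist n (fun i j => gmul (z i) (ginv (z j))) ++
             flist n (fun i j => gmul (z i) (ginv (y j))) ++
             plist n (fun i j => gmul (y i) (ginv (y j))) ++ sO s).
  assert (HB1 : basic (sI s) O1 L).
  { split; [exact HI|]. intros a Ha. unfold O1 in Ha. apply in_app_or in Ha as [Ha|Ha].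
    - apply plist_in2 in Ha as [i [j [Hi [Hj [Hij ->]]]]]. apply Hz1; auto.
    - apply in_app_or in Ha as [Ha|Ha].
      + apply flist_in2 in Ha as [i [j [Hi [Hj ->]]]]. apply Hz2; [exact Hi|].
        apply in_or_app; right. apply in_map, in_seq; lia.
      + apply in_app_or in Ha as [Ha|Ha].
        * apply plist_in2 in Ha as [i [j [Hi [Hj [Hij ->]]]]]. intros Hc. apply Hy.
          exists i, j. repeat split; auto.
        * auto. }
  destruct (Hstar L HP n g1 ltac:(lia) Hpd1 (sI s) O1 HB1) as [L' [ga1 [HP' [HB' Hm1]]]].
  assert (Hm1' : forall i, i < n -> same_coset L' (gmul (x i) ga1) (z i)).
  { intros i Hi. specialize (Hm1 i Hi). unfold g1 in Hm1.
    destruct (Nat.ltb_spec i n); [|lia]. destruct (Nat.ltb_spec (i + n) n); [lia|].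
    replace (i + n - n) with i in Hm1 by lia. exact Hm1. }
  destruct (HPs _ HP') as [Hsub' _]. destruct HB' as [HI' HO'].
  set (g2 := fun i => if i <? n then z i else y (i - n)).
  assert (Hpd2 : pairwise_distinct_cosets L' (2 * n) g2).
  { intros i j Hi Hj Hij. unfold g2.
    destruct (Nat.ltb_spec i n), (Nat.ltb_spec j n).
    - apply HO'. unfold O1. apply in_or_app; left.
      apply (plist_in1 n (fun i j => gmul (z i) (ginv (z j)))); auto.
    - apply HO'. unfold O1. apply in_or_app; right. apply in_or_app; left.
      apply (flist_in1 n (fun i j => gmul (z i) (ginv (y j)))); lia.
    - intros Hc. apply sc_sym in Hc; [|exact Hsub']. revert Hc.
      apply HO'. unfold O1. apply in_or_app; right. apply in_or_app; left.
      apply (flist_in1 n (fun i j => gmul (z i) (ginv (y j)))); lia.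
    - apply HO'. unfold O1. apply in_or_app; right. apply in_or_app; right.
      apply in_or_app; left.
      apply (plist_in1 n (fun i j => gmul (y i) (ginv (y j)))); lia. }
  set (I2 := map (fun i => gmul (gmul (x i) ga1) (ginv (z i))) (seq 0 n) ++ sI s).
  assert (HB2 : basic I2 (sO s) L').
  { split.
    - intros a Ha. unfold I2 in Ha. apply in_app_or in Ha as [Ha|Ha]; [|auto].
      apply in_map_iff in Ha as [i [<- Hi]]. apply in_seq in Hi. apply Hm1'. lia.
    - intros a Ha. apply HO'. unfold O1. repeat (apply in_or_app; right). exact Ha. }
  destruct (Hstar L' HP' n g2 ltac:(lia) Hpd2 I2 (sO s) HB2) as [L'' [ga2 [HP'' [HB'' Hm2]]]].
  assert (Hm2' : forall i, i < n -> same_coset L'' (gmul (z i) ga2) (y i)).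
  { intros i Hi. specialize (Hm2 i Hi). unfold g2 in Hm2.
    destruct (Nat.ltb_spec i n); [|lia]. destruct (Nat.ltb_spec (i + n) n); [lia|].
    replace (i + n - n) with i in Hm2 by lia. exact Hm2. }
  destruct (HPs _ HP'') as [Hsub'' _]. destruct HB'' as [HI'' HO''].
  assert (Key : forall i, i < n -> L'' (gmul (gmul (x i) (gmul ga1 ga2)) (ginv (y i)))).
  { intros i Hi. rewrite gmul_assoc.
    apply (sc_trans L'' Hsub'' _ (gmul (z i) ga2)).
    - unfold same_coset. rewrite rmul_cancel. apply HI''. unfold I2. apply in_or_app; left.
      apply in_map_iff. exists i; split; [reflexivity|apply in_seq; lia].
    - apply Hm2'; auto. }
  exists (mkst L'' (map (fun i => gmul (gmul (x i) (gmul ga1 ga2)) (ginv (y i))) (seq 0 n) ++ I2) (sO s)).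
  split; [split; [exact HP''|split]|split; [split|]]; simpl.
  - intros a Ha. apply in_app_or in Ha as [Ha|Ha]; [|auto].
    apply in_map_iff in Ha as [i [<- Hi]]. apply in_seq in Hi. apply Key. lia.
  - exact HO''.
  - unfold I2. apply incl_appr, incl_appr, incl_refl.
  - apply incl_refl.
  - right; right. exists (gmul ga1 ga2). intros i Hi. change (i < n) in Hi.
    apply in_or_app; left. apply in_map_iff. exists i; split; [reflexivity|apply in_seq; lia].
Qed.

Definition req {G : group} (e : nat -> G) (sl : nat -> list G) (t : nat -> list G * list G)
  (k : nat) (s : state G) : Prop :=
  (In (e k) (sI s) \/ In (e k) (sO s)) /\
  (exists g, forall h, In h (sl k) -> In (gmul g (ginv h)) (sO s)) /\
  task_ok (fun a => In a (sI s)) (fst (t k)) (snd (t k)).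

Lemma ext_trans {G : group} (a b c : state G) : ext a b -> ext b c -> ext a c.
Proof. intros [H1 H2] [H3 H4]. split; eapply incl_tran; eauto. Qed.

Lemma ext_refl {G : group} (a : state G) : ext a a.
Proof. split; apply incl_refl. Qed.

Lemma step_all {G : group} (P : subset_of G -> Prop) (HPs : forall L, P L -> SubInf L)
  (Hstar : condition_star P) e sl t k (s : state G) :
  valid P s -> exists s', valid P s' /\ ext s s' /\ req e sl t k s'.
Proof.
  intros Hv. destruct (step1 P (e k) s Hv) as [s1 [Hv1 [He1 R1]]].
  destruct (step2 P HPs (sl k) s1 Hv1) as [s2 [Hv2 [He2 [g R2]]]].
  destruct (step3 P HPs Hstar (fst (t k)) (snd (t k)) s2 Hv2) as [s3 [Hv3 [He3 R3]]].
  exists s3. split; [exact Hv3|split; [eauto using ext_trans|]].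
  destruct He2 as [HI2 HO2]. destruct He3 as [HI3 HO3].
  split; [|split].
  - destruct R1; [left; apply HI3, HI2; auto | right; apply HO3, HO2; auto].
  - exists g. intros h Hh. apply HO3. auto.
  - exact R3.
Qed.

Lemma build_seq {A : Type} (Q : A -> Prop) (R : nat -> A -> A -> Prop) (a0 : A) :
  Q a0 -> (forall k a, Q a -> exists b, Q b /\ R k a b) ->
  exists sq : nat -> A, sq 0 = a0 /\ forall k, Q (sq k) /\ R k (sq k) (sq (S k)).
Proof.
  intros H0 Hs.
  assert (Ht : forall k a, exists b, Q a -> Q b /\ R k a b).
  { intros k a. destruct (classic (Q a)) as [Ha|Ha].
    - destruct (Hs k a Ha) as [b Hb]. exists b; auto.
    - exists a. intros; contradiction. }
  pose (F := fun k a => proj1_sig (constructive_indefinite_description _ (Ht k a))).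
  assert (HF : forall k a, Q a -> Q (F k a) /\ R k a (F k a)).
  { intros k a. exact (proj2_sig (constructive_indefinite_description _ (Ht k a))). }
  exists (fun k => nat_rect (fun _ => A) a0 (fun k a => F k a) k). split; [reflexivity|].
  assert (HQ : forall k, Q (nat_rect (fun _ => A) a0 (fun k a => F k a) k)).
  { induction k; simpl; [exact H0|]. apply HF. exact IHk. }
  intros k. split; [apply HQ|]. simpl. apply HF. apply HQ.
Qed.

Lemma list_bound {G : group} (A : nat -> list G)
  (Amono : forall k m, k <= m -> incl (A k) (A m)) (l : list G) :
  (forall x, In x l -> exists k, In x (A k)) -> exists K, incl l (A K).
Proof.
  induction l as [|a l IH]; intros H.
  - exists 0. apply incl_nil_l.
  - destruct (H a (or_introl eq_refl)) as [k1 Hk1].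
    destruct IH as [k2 Hk2]. { intros x Hx. apply H. right; exact Hx. }
    exists (max k1 k2). apply incl_cons.
    + apply (Amono k1); [lia|exact Hk1].
    + eapply incl_tran; [exact Hk2|apply Amono; lia].
Qed.

Lemma limit_ok {G : group} (P : subset_of G -> Prop) (HPs : forall L, P L -> SubInf L)
  e sl t (He : forall x, exists k, e k = x) (Hsl : forall l, exists k, sl k = l)
  (Ht : forall p, exists k, t k = p) (sq : nat -> state G)
  (Hv : forall k, valid P (sq k)) (Hext : forall k, ext (sq k) (sq (S k)))
  (Hreq : forall k, req e sl t k (sq (S k))) :
  let Lim := fun x => exists k, In x (sI (sq k)) in
  HT Lim /\ closure_SubInf P Lim /\ basic (sI (sq 0)) (sO (sq 0)) Lim.
Proof.
  intros Lim.
  assert (Hmono : forall k m, k <= m -> ext (sq k) (sq m)).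
  { intros k m Hkm. induction Hkm; [apply ext_refl|]. eapply ext_trans; eauto. }
  assert (HbL : forall k, basic (sI (sq k)) (sO (sq k)) Lim).
  { intros k. split.
    - intros x Hx. exists k; exact Hx.
    - intros x Hx [j Hj]. destruct (Hv (max k j)) as [_ [HIm HOm]].
      destruct (Hmono k (max k j)) as [_ HO1]; [lia|].
      destruct (Hmono j (max k j)) as [HI2 _]; [lia|].
      apply (HOm x); auto. }
  assert (Hdec : forall x, Lim x \/ exists k, In x (sO (sq k))).
  { intros x. destruct (He x) as [m <-]. destruct (Hreq m) as [[H|H] _].
    - left. exists (S m). exact H.
    - right. exists (S m). exact H. }
  assert (Hev : forall x K, (forall m, K <= m -> sL (sq m) x) -> Lim x).
  { intros x K H. destruct (Hdec x) as [Hx|[c Hc]]; [exact Hx|].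
    destruct (Hv (max K c)) as [_ [_ HOm]].
    destruct (Hmono c (max K c)) as [_ HO1]; [lia|].
    exfalso. apply (HOm x); auto. apply H. lia. }
  assert (HLk : forall x, Lim x -> exists K, forall m, K <= m -> sL (sq m) x).
  { intros x [k Hk]. exists k. intros m Hm. destruct (Hv m) as [_ [HIm _]].
    apply HIm. destruct (Hmono k m Hm) as [HI1 _]. auto. }
  assert (Hsubm : forall m, is_subgroup (sL (sq m))).
  { intros m. destruct (Hv m) as [HPm _]. exact (proj1 (HPs _ HPm)). }
  assert (Hsub : is_subgroup Lim).
  { split; [|split].
    - apply (Hev _ 0). intros m _. exact (proj1 (Hsubm m)).
    - intros a b Ha Hb. destruct (HLk a Ha) as [Ka HKa]. destruct (HLk b Hb) as [Kb HKb].
      apply (Hev _ (Ka + Kb)). intros m Hm. apply (proj1 (proj2 (Hsubm m))).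
      + apply HKa; lia.
      + apply HKb; lia.
    - intros a Ha. destruct (HLk a Ha) as [Ka HKa].
      apply (Hev _ Ka). intros m Hm. apply (proj2 (proj2 (Hsubm m))). auto. }
  assert (Hinf : infinite_index Lim).
  { intros [s Hs]. destruct (Hsl s) as [m Hm]. destruct (Hreq m) as [_ [[g Hg] _]].
    destruct (Hs g) as [h [Hh Hsc]]. rewrite <- Hm in Hh.
    apply (proj2 (HbL (S m)) _ (Hg h Hh)). exact Hsc. }
  split; [split; [split; assumption|]|split].
  - apply (task_HT Lim t Ht). intros k. destruct (Hreq k) as [_ [_ H3]].
    apply (task_ok_mono _ _ _ _ (fun a Ha => ex_intro _ (S k) Ha) H3).
  - split; [split; assumption|]. intros I O [HI HO].
    destruct (list_bound (fun k => sI (sq k)) (fun k m H => proj1 (Hmono k m H)) I)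
      as [K1 HK1]. { intros x Hx. apply HI. exact Hx. }
    destruct (list_bound (fun k => sO (sq k)) (fun k m H => proj2 (Hmono k m H)) O)
      as [K2 HK2].
    { intros x Hx. destruct (Hdec x) as [Hl|Hl]; [|exact Hl]. exfalso. exact (HO x Hx Hl). }
    exists (sL (sq (max K1 K2))). destruct (Hv (max K1 K2)) as [HPm Hbm]. split; [exact HPm|].
    apply (basic_mono I O (sI (sq (max K1 K2))) (sO (sq (max K1 K2)))); [| |exact Hbm].
    + eapply incl_tran; [exact HK1|]. apply (Hmono K1 (max K1 K2)). lia.
    + eapply incl_tran; [exact HK2|]. apply (Hmono K2 (max K1 K2)). lia.
  - apply HbL.
Qed.

Theorem mainTheorem7 (G : group) (P : subset_of G -> Prop) :
  countable_group G ->
  (forall L, P L -> SubInf L) ->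
  condition_star P ->
  dense_in (fun L => HT L /\ closure_SubInf P L) (closure_SubInf P) /\
  Gdelta_in (fun L => HT L /\ closure_SubInf P L) (closure_SubInf P).
Proof.
  intros Hc HPs Hstar.
  destruct (enum_G Hc) as [e He]. destruct (enum_lists Hc) as [sl Hsl].
  destruct (enum_tasks Hc) as [t Ht].
  split.
  - intros L [HsubL HclL] I O Hb. destruct (HclL I O Hb) as [L0 [HP0 Hb0]].
    destruct (build_seq (valid P) (fun k a b => ext a b /\ req e sl t k b) (mkst L0 I O))
      as [sq [Hsq0 Hsq]].
    + split; assumption.
    + intros k a Ha. destruct (step_all P HPs Hstar e sl t k a Ha) as [b [Hb1 [Hb2 Hb3]]].
      exists b. auto.
    + destruct (limit_ok P HPs e sl t He Hsl Ht sq (fun k => proj1 (Hsq k))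
        (fun k => proj1 (proj2 (Hsq k))) (fun k => proj2 (proj2 (Hsq k))))
        as [H1 [H2 H3]].
      eexists. split; [split; [exact H1|exact H2]|split; [exact H2|]].
      rewrite Hsq0 in H3. exact H3.
  - exists (fun k L => SubInf L /\ task_ok L (fst (t k)) (snd (t k))). split.
    + intros k L [HS Htk]. split; [exact HS|]. destruct (t k) as [xs ys]. simpl in *.
      unfold task_ok in Htk.
      destruct Htk as [[i [j [Hi [Hj [Hij Hl]]]]]|[[i [j [Hi [Hj [Hij Hl]]]]]|[g Hg]]].
      * exists [gmul (tfun xs i) (ginv (tfun xs j))], []. split.
        { split; [intros a [<-|[]]; exact Hl|intros a []]. }
        intros L' HS' [HI' _]. split; [exact HS'|]. left. exists i, j.
        repeat split; auto. apply HI'. left; reflexivity.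
      * exists [gmul (tfun ys i) (ginv (tfun ys j))], []. split.
        { split; [intros a [<-|[]]; exact Hl|intros a []]. }
        intros L' HS' [HI' _]. split; [exact HS'|]. right; left. exists i, j.
        repeat split; auto. apply HI'. left; reflexivity.
      * exists (map (fun i => gmul (gmul (tfun xs i) g) (ginv (tfun ys i))) (seq 0 (length xs))), [].
        split.
        { split; [|intros a []]. intros a Ha. apply in_map_iff in Ha as [i [<- Hi]].
          apply in_seq in Hi. apply Hg. lia. }
        intros L' HS' [HI' _]. split; [exact HS'|]. right; right. exists g.
        intros i Hi. apply HI'. apply in_map_iff. exists i. split; [reflexivity|apply in_seq; lia].
    + intros L. split.
      * intros [[HS Hht] Hcl]. split; [exact Hcl|]. intros k. split; [exact HS|].
        apply HT_task; exact Hht.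
      * intros [Hcl Hall]. split; [|exact Hcl]. split; [exact (proj1 Hcl)|].
        apply (task_HT L t Ht). intros k. exact (proj2 (Hall k)).
Qed.
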